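(* Let $p\in(0,1)$ be fixed. With high probability, for every set $V\subset[n]$ of size at least $\frac{3}{p}\ln n$, the number of vertices of $[n]\setminus V$ having at most $\frac{1}{2}\ln n$ neighbours in $V$ in $G(n,p)$ is less than $\ln^3 n$.
   Context: $G(n,p)$ is the binomial random graph on $[n]$ with edge probability $p$; with high probability means with probability tending to $1$ as $n\to\infty$. *)

(* Defs.v *)
From HB Require Import structures.
From mathcomp Require Import all_boot all_order all_algebra.
From mathcomp Require Import all_classical all_reals all_analysis.
Set Implicit Arguments. Unset Strict Implicit. Unset Printing Implicit Defensive.
Import Order.TTheory GRing.Theory Num.Theory.
Local Open Scope ring_scope.

Definition pairs (n : nat) : {set {set 'I_n}} := [set e : {set 'I_n} | #|e| == 2%N].

Definition is_graph (n : nat) (G : {set {set 'I_n}}) : bool := G \subset pairs n.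

Definition adj (n : nat) (G : {set {set 'I_n}}) (x y : 'I_n) : bool :=
  [set x; y] \in G.

Definition gnp_weight (R : realType) (n : nat) (p : R) (G : {set {set 'I_n}}) : R :=
  p ^+ #|G| * (1 - p) ^+ (#|pairs n| - #|G|).

Definition gnp_prob (R : realType) (n : nat) (p : R)
    (P : {set {set 'I_n}} -> bool) : R :=
  \sum_(G in powerset (pairs n) | P G) gnp_weight p G.

Definition deg_in (n : nat) (G : {set {set 'I_n}}) (V : {set 'I_n}) (x : 'I_n) : nat :=
  #|[set y in V | adj G x y]|.

Definition claim8_event (R : realType) (n : nat) (p : R) (G : {set {set 'I_n}}) : bool :=
  [forall V : {set 'I_n},
     ((3 / p) * ln (n%:R : R) <= (#|V|%:R : R)) ==>
     ((#|[set x in ~: V | ((deg_in G V x)%:R : R) <= ln (n%:R : R) / 2]|%:R : R)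
        < ln (n%:R : R) ^+ 3)].

(* Main.v *)
Require Import Defs.
From HB Require Import structures.
From mathcomp Require Import all_boot all_order all_algebra.
From mathcomp Require Import all_classical all_reals all_analysis.
From mathcomp Require Import ring lra.
Set Implicit Arguments. Unset Strict Implicit. Unset Printing Implicit Defensive.
Import Order.TTheory GRing.Theory Num.Theory.
Local Open Scope ring_scope.

Lemma prod_expand (R : comNzRingType) (X : finType) (P : {set X}) (f g : X -> R) :
  \sum_(J in powerset P) (\prod_(e in J) f e) * (\prod_(e in P :\: J) g e)
  = \prod_(e in P) (f e + g e).
Proof.
rewrite [RHS]big_mkcond /=.
rewrite (eq_bigr (fun e => (if e \in P then f e else 0) + (if e \in P then g e else 1))); last first.
  by move=> e _; case: ifP => _; rewrite ?add0r.
rewrite bigA_distr /=.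
rewrite [LHS]big_mkcond /=; apply: eq_bigr => J _.
rewrite powersetE.
case: (boolP (J \subset P)) => JP.
  rewrite [RHS](bigID (mem J)) /=.
  congr (_ * _).
    by apply: eq_bigr => e eJ; rewrite eJ (fintype.subsetP JP e eJ).
  rewrite [RHS]big_mkcond [LHS]big_mkcond /=; apply: eq_bigr => e _.
  rewrite inE; case: (e \in J) => //=.
have [e eJ eP] : exists2 e, e \in J & e \notin P.
  by case/fintype.subsetPn: JP => e eJ eP; exists e.
by rewrite (bigD1 e) //= eJ (negbTE eP) mul0r.
Qed.

Lemma gen_fun (R : realType) (n : nat) (p : R) (h : {set 'I_n} -> R) :
  \sum_(G in powerset (pairs n)) gnp_weight p G * \prod_(e in G) h e
  = \prod_(e in pairs n) (p * h e + (1 - p)).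
Proof.
rewrite -prod_expand; apply: eq_bigr => G; rewrite powersetE => GP.
rewrite /gnp_weight big_split /= prodr_const !prodr_const.
by rewrite cardsD (finset.setIidPr GP) mulrAC.
Qed.


Lemma total_weight (R : realType) (n : nat) (p : R) :
  \sum_(G in powerset (pairs n)) gnp_weight p G = 1.
Proof.
have -> : (1 : R) = \prod_(e in pairs n) (p * 1 + (1 - p)).
  by rewrite big1 // => e _; rewrite mulr1 addrC subrK.
rewrite -(gen_fun p (fun _ => 1)); apply: eq_bigr => G _.
by rewrite big1_eq mulr1.
Qed.

Definition ebw (n : nat) (U V : {set 'I_n}) : {set {set 'I_n}} :=
  [set [set x.1; x.2] | x in finset.setX U V].

Lemma ebw_inj n (U V : {set 'I_n}) : [disjoint U & V] ->
  {in finset.setX U V &, injective (fun x : 'I_n * 'I_n => [set x.1; x.2])}.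
Proof.
move=> d [u v] [u' v']; rewrite !finset.in_setX => /andP[uU vV] /andP[u'U v'V] /= E.
have : u \in [set u'; v'] by rewrite -E set21.
rewrite !inE => /orP[/eqP eu | /eqP uv']; last first.
  by move: (disjointFr d uU); rewrite uv' v'V.
have : v \in [set u'; v'] by rewrite -E set22.
rewrite !inE => /orP[/eqP vu' | /eqP ev]; last by rewrite eu ev.
by move: (disjointFr d u'U); rewrite -vu' vV.
Qed.

Lemma ebw_sub n (U V : {set 'I_n}) : [disjoint U & V] -> ebw U V \subset pairs n.
Proof.
move=> d; apply/fintype.subsetP => e /imsetP [[u v]] /=.
rewrite finset.in_setX => /andP[uU vV] ->.
rewrite /pairs inE cards2.
have : u != v by apply/eqP => uv; move: (disjointFr d uU); rewrite uv vV.
by move=> ->.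
Qed.

Lemma ebw_card n (U V : {set 'I_n}) : [disjoint U & V] -> #|ebw U V| = (#|U| * #|V|)%N.
Proof. by move=> d; rewrite /ebw card_in_imset ?cardsX //; exact: ebw_inj. Qed.

Lemma prod_deg (R : realType) n (a : R) (G : {set {set 'I_n}}) (U V : {set 'I_n}) :
  [disjoint U & V] ->
  \prod_(u in U) a ^+ deg_in G V u = \prod_(e in G) (if e \in ebw U V then a else 1).
Proof.
move=> d.
transitivity (\prod_(u in U) \prod_(v in V) (if [set u; v] \in G then a else 1)).
  apply: eq_bigr => u _; rewrite /deg_in -prodr_const big_mkcond /= [RHS]big_mkcond /=.
  apply: eq_bigr => v _; rewrite inE /adj.
  by case: (v \in V); case: ([set u; v] \in G).
rewrite pair_big /=.
transitivity (\prod_(x in finset.setX U V) (if [set x.1; x.2] \in G then a else 1)).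
  by apply: eq_bigl => -[u v]; rewrite finset.in_setX.
have E := big_imset (R := R) (idx := 1) (aop := *%R) (fun e => if e \in G then a else 1) (ebw_inj d).
rewrite /= in E; rewrite -E -/(ebw U V).
rewrite big_mkcond [RHS]big_mkcond /=; apply: eq_bigr => e _.
by case: (e \in G); case: (e \in ebw U V).
Qed.

Lemma term_eq (R : realType) n (p a : R) (U V : {set 'I_n}) : [disjoint U & V] ->
  \sum_(G in powerset (pairs n)) gnp_weight p G * \prod_(u in U) (n%:R * a ^+ deg_in G V u)
  = n%:R ^+ #|U| * (p * a + (1 - p)) ^+ (#|U| * #|V|).
Proof.
move=> d.
rewrite (eq_bigr (fun G => n%:R ^+ #|U| * (gnp_weight p G * \prod_(e in G) (if e \in ebw U V then a else 1)))); last first.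
  by move=> G _; rewrite big_split /= prodr_const (prod_deg _ _ d) mulrCA.
rewrite -mulr_sumr gen_fun; congr (_ * _).
rewrite (big_setID (ebw U V)) /= (finset.setIidPr (ebw_sub d)).
rewrite [X in _ * X]big1 ?mulr1; last first.
  by move=> e; rewrite inE => /andP[/negbTE -> _]; rewrite mulr1 addrC subrK.
rewrite -(ebw_card d) -prodr_const; apply: eq_bigr => e ->.
by [].
Qed.

Lemma exists_subset_card (T : finType) (A : {set T}) k : (k <= #|A|)%N ->
  exists2 B : {set T}, B \subset A & #|B| = k.
Proof.
move=> kA; exists [set x in take k (enum A)].
  by apply/fintype.subsetP => x; rewrite inE => /mem_take; rewrite mem_enum.
rewrite cardsE; move/card_uniqP: (take_uniq k (enum_uniq (mem A))) => ->.
by rewrite size_takel // -cardE.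
Qed.

Lemma bin_le_pow n m : ('C(n, m) <= n ^ m)%N.
Proof.
apply: (@leq_trans ('C(n, m) * m`!)); first by rewrite leq_pmulr ?fact_gt0.
rewrite bin_ffact ffact_prod.
have -> : (n ^ m = \prod_(i < m) n)%N by rewrite prod_nat_const card_ord.
by apply: leq_prod => i _; rewrite leq_subr.
Qed.

Lemma ler_sum_term (R : realType) (I : finType) (A : pred I) (F : I -> R) i :
  i \in A -> (forall j, A j -> 0 <= F j) -> F i <= \sum_(j in A) F j.
Proof.
move=> iA F0; rewrite (bigD1 i) //= lerDl sumr_ge0 // => j /andP[jA _]; exact: F0.
Qed.

Lemma weight_ge0 (R : realType) n (p : R) (G : {set {set 'I_n}}) :
  0 <= p -> p <= 1 -> 0 <= gnp_weight p G.
Proof. by move=> p0 p1; rewrite /gnp_weight mulr_ge0 // exprn_ge0 // subr_ge0. Qed.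

Lemma factor_ge1 (R : realType) n (d : nat) : (0 < n)%N ->
  (d%:R <= ln (n%:R : R) / 2) -> 1 <= n%:R * expR (-2 : R) ^+ d.
Proof.
move=> n0 hd.
have nE : (n%:R : R) = expR (ln n%:R) by rewrite lnK // posrE ltr0n.
rewrite -expRM_natl nE -expRD -[leLHS]expR0 ler_expR; lra.
Qed.

Lemma prob_split (R : realType) n (p : R) (P : {set {set 'I_n}} -> bool) :
  gnp_prob p P + gnp_prob p (fun G => ~~ P G) = 1.
Proof. by rewrite /gnp_prob -(total_weight n p) [RHS](bigID P). Qed.

Lemma bad_bound (R : realType) (p : R) n : 0 < p -> p < 1 -> (0 < n)%N ->
  0 <= ln (n%:R : R) ->
  gnp_prob p (fun G : {set {set 'I_n}} => ~~ claim8_event p G) <=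
    ('C(n, Num.truncn (3 / p * ln (n%:R : R))) * 'C(n, Num.truncn (ln (n%:R : R) ^+ 3)))%:R *
    (n%:R ^+ Num.truncn (ln (n%:R : R) ^+ 3) *
     (p * expR (-2) + (1 - p)) ^+ (Num.truncn (ln (n%:R : R) ^+ 3) * Num.truncn (3 / p * ln (n%:R : R)))).
Proof.
move=> p0 p1 n0 L0.
set L := ln _. set k := Num.truncn (3 / p * L). set s := Num.truncn (L ^+ 3).
set a := expR (-2).
pose KS m := [set A : {set 'I_n} | #|A| == m].
pose Theta (G : {set {set 'I_n}}) (V U : {set 'I_n}) := if [disjoint U & V] then \prod_(u in U) (n%:R * a ^+ deg_in G V u) else (0 : R).
pose Psi (G : {set {set 'I_n}}) (V : {set 'I_n}) := \sum_(U in KS s) Theta G V U.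
pose Phi (G : {set {set 'I_n}}) := \sum_(V in KS k) Psi G V.
have Theta0 : forall G V U, 0 <= Theta G V U.
  move=> G V U; rewrite /Theta; case: ifP => // _.
  apply: prodr_ge0 => u _; apply: mulr_ge0 => //; apply: exprn_ge0; exact: expR_ge0.
have Psi0 : forall G V, 0 <= Psi G V by move=> G V; apply: sumr_ge0 => U _.
have Phi0 : forall G, 0 <= Phi G by move=> G; apply: sumr_ge0 => V _.
have Phi1 : forall G, ~~ claim8_event p G -> 1 <= Phi G.
  move=> G; rewrite /claim8_event => /forallPn [V]; rewrite negb_imply => /andP[hV hB].
  rewrite -leNgt in hB.
  have kV : (k <= #|V|)%N.
    rewrite -(ler_nat R); apply: le_trans hV; rewrite truncn_le.
    apply: mulr_ge0 => //; apply: divr_ge0 => //; exact: ltW.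
  set B := [set x in ~: V | _] in hB.
  have sB : (s <= #|B|)%N.
    rewrite -(ler_nat R); apply: le_trans hB; rewrite truncn_le; exact: exprn_ge0.
  have [V0 V0V cV0] := exists_subset_card kV.
  have [U0 U0B cU0] := exists_subset_card sB.
  have d : [disjoint U0 & V0].
    rewrite finset.disjoints_subset; apply/fintype.subsetP => x xU.
    have := fintype.subsetP U0B x xU; rewrite !inE => /andP[xnV _].
    by apply/negP => xV0; move: xnV; rewrite (fintype.subsetP V0V x xV0).
  apply: le_trans (ler_sum_term (F := Psi G) (i := V0) _ _); last 2 first.
  - by rewrite inE cV0.
  - by move=> j _.
  apply: le_trans (ler_sum_term (F := Theta G V0) (i := U0) _ _); last 2 first.
  - by rewrite inE cU0.
  - by move=> j _.
  rewrite /Theta d; apply: (big_ind (fun x => 1 <= x)) => //; first exact: mulr_ege1.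
  move=> u uU; apply: factor_ge1 => //.
  have := fintype.subsetP U0B u uU; rewrite inE => /andP[_ hu].
  apply: le_trans hu; rewrite ler_nat /deg_in; apply: subset_leq_card.
  apply/fintype.subsetP => y; rewrite !inE => /andP[yV0 ->].
  by rewrite (fintype.subsetP V0V y yV0).
set c := n%:R ^+ s * (p * a + (1 - p)) ^+ (s * k).
have c0 : 0 <= c.
  apply: mulr_ge0; first exact: exprn_ge0.
  apply: exprn_ge0; apply: addr_ge0; last by rewrite subr_ge0 ltW.
  by apply: mulr_ge0; [exact: ltW | exact: expR_ge0].
have w0 : forall G : {set {set 'I_n}}, 0 <= gnp_weight p G.
  by move=> G; apply: weight_ge0; exact: ltW.
apply: (@le_trans _ _ (\sum_(G in powerset (pairs n)) gnp_weight p G * Phi G)).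
  rewrite /gnp_prob big_mkcondr /=; apply: ler_sum => G _.
  case: ifP => hb.
    by rewrite ler_peMr //; exact: Phi1.
  by rewrite mulr_ge0.
have E : forall G, gnp_weight p G * Phi G =
    \sum_(V in KS k) \sum_(U in KS s) gnp_weight p G * Theta G V U.
  by move=> G; rewrite /Phi mulr_sumr; apply: eq_bigr => V _; rewrite /Psi mulr_sumr.
rewrite (eq_bigr _ (fun G _ => E G)) exchange_big /=.
rewrite (eq_bigr (fun V => \sum_(U in KS s) \sum_(G in powerset (pairs n)) gnp_weight p G * Theta G V U)); last first.
  by move=> V _; rewrite exchange_big.
apply: (@le_trans _ _ (\sum_(V in KS k) \sum_(U in KS s) c)).
  apply: ler_sum => V hV; apply: ler_sum => U hU.
  case: (boolP [disjoint U & V]) => d.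
    rewrite (eq_bigr (fun G => gnp_weight p G * \prod_(u in U) (n%:R * a ^+ deg_in G V u))); last first.
      by move=> G _; rewrite /Theta d.
    rewrite term_eq //; move: hV hU; rewrite !inE => /eqP -> /eqP ->; exact: lexx.
  by rewrite big1 // => G _; rewrite /Theta (negbTE d) mulr0.
rewrite !sumr_const /KS !card_draws card_ord.
by rewrite -mulrnA mulr_natl mulnC lexx.
Qed.

Lemma small (R : realType) (p : R) n : 0 < p -> p < 1 -> (0 < n)%N ->
  24 / p + 9 <= ln (n%:R : R) ->
  ('C(n, Num.truncn (3 / p * ln (n%:R : R))) * 'C(n, Num.truncn (ln (n%:R : R) ^+ 3)))%:R *
    (n%:R ^+ Num.truncn (ln (n%:R : R) ^+ 3) *
     (p * expR (-2) + (1 - p)) ^+ (Num.truncn (ln (n%:R : R) ^+ 3) * Num.truncn (3 / p * ln (n%:R : R))))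
  <= (n%:R : R)^-1.
Proof.
move=> p0 p1 n0.
set L := ln _. set x := 3 / p * L. set k := Num.truncn x. set s := Num.truncn (L ^+ 3).
move=> hL.
set a := expR (-2 : R).
have pinv : p / p = 1 by rewrite divff // gt_eqF.
have L8 : 9 <= L.
  have : 0 <= 24 / p by apply: divr_ge0 => //; exact: ltW.
  lra.
have L0 : 0 <= L by lra.
have x0 : 0 <= x by apply: mulr_ge0 => //; apply: divr_ge0 => //; exact: ltW.
have kx : k%:R <= x by rewrite truncn_le.
have xk : x < k%:R + 1 by rewrite natr1; exact: truncnS_gt.
have sL : s%:R <= L ^+ 3 by rewrite truncn_le exprn_ge0.
have Ls : L ^+ 3 < s%:R + 1 by rewrite natr1; exact: truncnS_gt.
have px : p * x = 3 * L by rewrite /x mulrA mulrCA pinv mulr1.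
set K := k%:R in kx xk. set S := s%:R in sL Ls.
have K0 : 0 <= K by rewrite /K ler0n.
have S0 : 0 <= S by rewrite /S ler0n.
have h1 : 3 * L - p < p * K.
  have : p * x < p * (K + 1) by rewrite ltr_pM2l.
  lra.
have h2 : (9 / 4) * S * L - S <= (3 / 4) * p * S * K.
  have : 0 <= S * (p * K - (3 * L - p)) by apply: mulr_ge0 => //; lra.
  have : 0 <= S * (1 - p) by apply: mulr_ge0 => //; lra.
  nra.
set y := 24 / p in hL *.
have y0 : 0 <= y by apply: divr_ge0 => //; exact: ltW.
have xy : 8 * x = y * L by rewrite /x /y; field; rewrite gt_eqF.
have h3 : 8 * K + 8 <= S.
  have e1 : 0 <= L * (L - y - 9) by apply: mulr_ge0 => //; lra.
  have e2 : 0 <= L ^+ 2 * (L - 1) by apply: mulr_ge0; [exact: exprn_ge0 | lra].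
  have : L ^+ 3 = L ^+ 2 * L by rewrite exprSr.
  have : L ^+ 2 = L * L by rewrite expr2.
  nra.
have h4 : K * L + L <= S * L / 8.
  have : 0 <= L * (S - 8 * K - 8) by apply: mulr_ge0 => //; lra.
  lra.
have h5 : 0 <= S * (L - 8) by apply: mulr_ge0 => //; lra.
have key : K * L + 2 * (S * L) + (S * K) * (- (3 / 4 * p)) <= - L.
  nra.
have nE : (n%:R : R) = expR L by rewrite /L lnK // posrE ltr0n.
have a0 : 0 <= a by exact: expR_ge0.
have a4 : a <= 1 / 4.
  have e1 : 1 + 1 <= expR (1 : R) by exact: expR_ge1Dx.
  have e2 : expR (2 : R) = expR 1 * expR 1 by rewrite -expRD.
  have e3 : a * expR 2 = 1 by rewrite /a -expRD addNr expR0.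
  have e4 : 0 <= expR (1 : R) by exact: expR_ge0.
  have e5 : 4 <= expR (2 : R) by rewrite e2; nra.
  have : 0 <= a * (expR 2 - 4) by apply: mulr_ge0 => //; lra.
  lra.
have q0 : 0 <= p * a + (1 - p) by apply: addr_ge0; [apply: mulr_ge0 => //; exact: ltW | lra].
have qE : p * a + (1 - p) <= expR (- (3 / 4 * p)).
  apply: le_trans (expR_ge1Dx _).
  have : p * a <= p * (1 / 4) by rewrite ler_pM2l.
  lra.
have Cb : (('C(n, k) * 'C(n, s))%:R : R) <= n%:R ^+ k * n%:R ^+ s.
  by rewrite -!natrX -natrM ler_nat leq_mul // bin_le_pow.
apply: (@le_trans _ _ ((n%:R ^+ k * n%:R ^+ s) * (n%:R ^+ s * expR (- (3 / 4 * p)) ^+ (s * k)))).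
  apply: ler_pM => //.
  - by apply: mulr_ge0; apply: exprn_ge0.
  apply: ler_pM => //; try by apply: exprn_ge0.
  by apply: lerXn2r; rewrite ?nnegrE // expR_ge0.
rewrite nE -!expRM_natl -!expRD -expRN ler_expR natrM -/K -/S.
clear -key; lra.
Qed.

Import numFieldNormedType.Exports.
Local Open Scope classical_set_scope.

Theorem claim8 (R : realType) (p : R) (hp0 : 0 < p) (hp1 : p < 1) :
  (fun n : nat => gnp_prob p (claim8_event p (n := n))) @ \oo --> (1 : R).
Proof.
apply/cvgrPdist_le => e e0.
set M : R := 24 / p + 9.
have M0 : 0 <= M by rewrite /M; apply: addr_ge0 => //; apply: divr_ge0 => //; exact: ltW.
exists (maxn (Num.truncn (expR M)).+1 (Num.truncn (e^-1)).+1) => // n /=.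
rewrite geq_max => /andP[hn1 hn2].
have n0 : (0 < n)%N by apply: leq_trans hn1.
have hM : expR M < n%:R.
  by rewrite -truncn_lt_nat ?expR_ge0.
have he : e^-1 < n%:R.
  by rewrite -truncn_lt_nat // invr_ge0 ltW.
have ne : (n%:R : R)^-1 <= e.
  have ee : e * e^-1 = 1 by rewrite divff // gt_eqF.
  have : 0 < e * (n%:R - e^-1) by apply: mulr_gt0 => //; rewrite subr_gt0.
  move=> h.
  have h2 : 0 <= (n%:R)^-1 * (e * (n%:R - e^-1)) by apply: mulr_ge0; [rewrite invr_ge0 ler0n | exact: ltW].
  have h3 : (n%:R)^-1 * (e * (n%:R - e^-1)) = e - (n%:R)^-1.
    by field; rewrite pnatr_eq0 -lt0n n0 (gt_eqF e0).
  lra.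
have hL : M <= ln (n%:R : R).
  by rewrite -[leLHS]expRK ler_ln ?posrE ?expR_gt0 ?ltr0n // ltW.
have L0 : 0 <= ln (n%:R : R) by apply: le_trans hL.
have bb := bad_bound hp0 hp1 n0 L0.
have sm := small hp0 hp1 n0 hL.
have sp := prob_split p (claim8_event p (n := n)).
have b0 : 0 <= gnp_prob p (fun G : {set {set 'I_n}} => ~~ claim8_event p G).
  by apply: sumr_ge0 => G _; apply: weight_ge0; [exact: ltW | exact: ltW].
suff H : `|1 - gnp_prob p (claim8_event p (n := n))| <= e by exact H.
have -> : 1 - gnp_prob p (claim8_event p (n := n)) = gnp_prob p (fun G : {set {set 'I_n}} => ~~ claim8_event p G).
  by rewrite -sp addrC addKr.
rewrite ger0_norm //.
apply: le_trans bb _; apply: le_trans sm _; exact: ne.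
Qed.
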